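(* For relatively prime integers $r, s$ put $u = r^2 + s^2$, $v = 2r^2 - s^2$ and $A = uv(u^2 - v^2) = -3r^2(r^2+s^2)(r^2-2s^2)(2r^2-s^2)$. Then for all but finitely many pairs $(r,s)$ of relatively prime integers with $r \neq 0$, the eight rational numbers \[ 1,\ -1,\ A,\ -A,\ uv,\ -uv,\ u^2 - v^2,\ -(u^2-v^2) \] represent eight pairwise distinct classes in $\mathbb{Q}^\times/(\mathbb{Q}^\times)^2$.
   Context: $\mathbb{Q}^\times/(\mathbb{Q}^\times)^2$ denotes the group of nonzero rationals modulo nonzero squares; two nonzero rationals represent the same class iff their quotient is a square of a rational. *)

(* Defs.v *)
From mathcomp Require Import all_boot all_order all_algebra.
Set Implicit Arguments. Unset Strict Implicit. Unset Printing Implicit Defensive.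
Import Order.TTheory GRing.Theory Num.Theory.
Local Open Scope ring_scope.

Definition same_sq_class (x y : rat) : Prop :=
  x != 0 /\ y != 0 /\ exists q : rat, x / y = q ^+ 2.

Definition u_of (r s : int) : rat := (r%:~R) ^+ 2 + (s%:~R) ^+ 2.
Definition v_of (r s : int) : rat := 2 * (r%:~R) ^+ 2 - (s%:~R) ^+ 2.
Definition A_of (r s : int) : rat :=
  u_of r s * v_of r s * (u_of r s ^+ 2 - v_of r s ^+ 2).

Definition eight_vals (r s : int) : seq rat :=
  [:: 1; -1; A_of r s; - A_of r s; u_of r s * v_of r s; - (u_of r s * v_of r s);
      u_of r s ^+ 2 - v_of r s ^+ 2; - (u_of r s ^+ 2 - v_of r s ^+ 2)].

Definition eight_distinct_classes (r s : int) : Prop :=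
  (forall i : 'I_8, nth 0 (eight_vals r s) i != 0) /\
  (forall i j : 'I_8, i != j ->
     ~ same_sq_class (nth 0 (eight_vals r s) i) (nth 0 (eight_vals r s) j)).

(* Main.v *)
Require Import Defs.
From mathcomp Require Import all_boot all_order all_algebra.
From mathcomp Require Import zify ring.
Import Order.TTheory GRing.Theory Num.Theory.
Set Implicit Arguments. Unset Strict Implicit. Unset Printing Implicit Defensive.

Lemma z3_sq (x y : 'Z_3) : ((x ^+ 2 + y ^+ 2)%R == 0%R) ==> (x == 0%R) && (y == 0%R).
Proof. by case: x => [[|[|[|//]]] ?]; case: y => [[|[|[|//]]] ?]. Qed.

Lemma nat_z3 (n : nat) : ((n%:R : 'Z_3)%R == 0%R) = (3 %| n).
Proof. by rewrite -val_eqE /= val_Zp_nat. Qed.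

Lemma dvd3_sq (x y : nat) : 3 %| x ^ 2 + y ^ 2 -> (3 %| x) && (3 %| y).
Proof.
rewrite -!nat_z3 natrD !natrX => H.
by have := z3_sq (x%:R)%R (y%:R)%R; rewrite H.
Qed.

Lemma sq_coprime (X Y Z : nat) : coprime X Y -> X * Y = Z ^ 2 -> X = (gcdn X Z) ^ 2.
Proof.
move=> cXY hXYZ; apply/eqP; rewrite eqn_dvd; apply/andP; split.
  rewrite expnS expn1 muln_gcdl !muln_gcdr.
  rewrite !dvdn_gcd (dvdn_mulr _ (dvdnn X)) (dvdn_mulr _ (dvdnn X)).
  by rewrite (dvdn_mull _ (dvdnn X)) mulnn -hXYZ dvdn_mulr.
have cg : coprime (gcdn X Z ^ 2) Y.
  by rewrite coprime_pexpl // (coprime_dvdl (dvdn_gcdl X Z) cXY).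
by rewrite -(Gauss_dvdr _ cg) mulnC hXYZ dvdn_pexp2r // dvdn_gcdr.
Qed.

Lemma sq_coprime2 (X Y Z : nat) : coprime X Y -> X * Y = Z ^ 2 ->
  exists x y, [/\ X = x ^ 2, Y = y ^ 2 & Z = x * y].
Proof.
move=> cXY h; exists (gcdn X Z), (gcdn Y Z).
have hX := sq_coprime cXY h.
have hY : Y = gcdn Y Z ^ 2 by apply: (@sq_coprime Y X Z); [rewrite coprime_sym | rewrite mulnC].
split=> //; apply: (expIn (isT : 0 < 2)); rewrite /= -h expnMn -hX -hY //.
Qed.

Lemma odd_sq (x : nat) : odd x -> exists k, x = 2 * k + 1.
Proof. move=> ox; exists x./2; rewrite -[x in x = _]odd_double_half ox; lia. Qed.
Lemma even_sq (x : nat) : ~~ odd x -> exists k, x = 2 * k.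
Proof. move=> ox; exists x./2; rewrite -[x in x = _]odd_double_half (negbTE ox); lia. Qed.

Lemma val_sq (p k n m : nat) : prime p -> ~~ (p %| k) -> 0 < n -> m ^ 2 = p * n ^ 2 * k -> False.
Proof.
move=> pp npk n0 h.
have k0 : 0 < k by case: k npk h => //; rewrite dvdn0.
have p0 := prime_gt0 pp.
have m0 : 0 < m by case: m h => [|m] h //; nia.
have := congr1 (logn p) h.
have n2 : 0 < n ^ 2 by rewrite expn_gt0 n0.
have pn : 0 < p * n ^ 2 by rewrite muln_gt0 p0.
rewrite (lognM p pn k0) (lognM p p0 n2) !lognX (logn_prime p pp) eqxx.
have -> : logn p k = 0 by apply/eqP; rewrite -leqn0 leqNgt logn_gt0 mem_primes pp k0.
lia.
Qed.

Lemma oddsq8 (x : nat) : odd x -> exists t, x ^ 2 = 8 * t + 1.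
Proof.
move=> /odd_sq [k ->]; case: (boolP (odd k)) => [/odd_sq [j ->]|/even_sq [j ->]].
  by exists (2 * j * j + 3 * j + 1); nia.
by exists (2 * j * j + j); nia.
Qed.

Lemma cop_gen (X Y c d : nat) : coprime c d -> odd X ->
  (forall g, g %| X -> g %| Y -> (g %| 2 * c ^ 2) && (g %| 2 * d ^ 2)) -> coprime X Y.
Proof.
move=> ccd oX H; have /andP [h1 h2] := H _ (dvdn_gcdl X Y) (dvdn_gcdr X Y).
have h3 : gcdn X Y %| 2.
  have : gcdn X Y %| gcdn (2 * c ^ 2) (2 * d ^ 2) by rewrite dvdn_gcd h1 h2.
  rewrite -muln_gcdr.
  by move: ccd; rewrite -(coprime_pexpl (k:=2)) // -(coprime_pexpr (k:=2)) // /coprime => /eqP ->; rewrite muln1.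
have h4 : gcdn X Y %| gcdn X 2 by rewrite dvdn_gcd dvdn_gcdl.
by rewrite /coprime -dvdn1; move: h4; rewrite (eqP (_ : coprime X 2)) // coprimen2.
Qed.

Lemma split3 (X Y M : nat) : coprime X Y -> X * Y = 3 * M ^ 4 -> 3 %| X ->
  exists c d, [/\ X = 3 * c ^ 4, Y = d ^ 4, M = c * d & coprime c d].
Proof.
move=> cXY h /dvdnP [X' hX]; subst X.
have cX'Y : coprime X' Y by move: cXY; rewrite coprimeMl => /andP [].
have h' : X' * Y = (M ^ 2) ^ 2.
  by apply/eqP; rewrite -(eqn_pmul2l (isT : 0 < 3)) -expnM mulnA (mulnC 3) h.
have [k [l [hk hl hM]]] := sq_coprime2 cX'Y h'.
have ckl : coprime k l by move: cX'Y; rewrite hk hl coprime_pexpl // coprime_pexpr.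
have [c [d [hc hd hcd]]] := sq_coprime2 ckl (esym hM).
exists c, d; split.
- by rewrite hk hc -expnM mulnC.
- by rewrite hl hd -expnM.
- by apply: (expIn (isT : 0 < 2)); rewrite /= hM hc hd expnMn.
- by move: ckl; rewrite hc hd coprime_pexpl // coprime_pexpr.
Qed.

Lemma step1 (r b s : nat) : 0 < r -> coprime b r -> b ^ 2 + 2 * r ^ 2 = s ^ 2 ->
  exists m n, [/\ s = 2 * m ^ 2 + n ^ 2, r = 2 * (m * n), coprime m n & odd b].
Proof.
move=> r0 cbr hs.
have ob : odd b.
  case: (boolP (odd b)) => // /even_sq [k hk].
  have or : odd r.
    case: (boolP (odd r)) => // /even_sq [j hj].
    by move: cbr; rewrite hk hj /coprime -muln_gcdr; case: (gcdn k j) => [|[|]].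
  have [j hj] := odd_sq or.
  case: (boolP (odd s)) => [/odd_sq [l hl]|/even_sq [l hl]]; subst; nia.
have [beta hb] := odd_sq ob.
have os : odd s.
  case: (boolP (odd s)) => // /even_sq [l hl]; subst; nia.
have [sig hsg] := odd_sq os.
have er : ~~ odd r.
  apply/negP => /odd_sq [j hj]; subst; nia.
have [R hR] := even_sq er.
have bs : beta <= sig by subst; nia.
set P := sig - beta; set Q := sig + beta + 1.
have hPQ : P * Q = 2 * R ^ 2 by rewrite /P /Q; subst; nia.
have cbs : coprime b s.
  have g2 : gcdn b s %| 2 * r ^ 2.
    by rewrite -(dvdn_addr _ (dvdn_exp (isT : 0 < 2) (dvdn_gcdl b s))) hs dvdn_exp // dvdn_gcdr.
  have cgr : coprime (gcdn b s) (r ^ 2).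
    by rewrite coprime_pexpr // (coprime_dvdl (dvdn_gcdl b s) cbr).
  rewrite Gauss_dvdl // in g2.
  have : gcdn b s %| gcdn b 2 by rewrite dvdn_gcd dvdn_gcdl.
  by rewrite (eqP (_ : coprime b 2)) ?coprimen2 // dvdn1.
have hsPQ : s = P + Q by rewrite /P /Q; lia.
have ePb : P + b = Q by rewrite /P /Q; lia.
have cPQ : coprime P Q.
  have h1 : gcdn P Q %| s by rewrite hsPQ dvdn_add ?dvdn_gcdl ?dvdn_gcdr.
  have h2 : gcdn P Q %| b.
    have : gcdn P Q %| P + b by rewrite ePb dvdn_gcdr.
    by rewrite dvdn_addr // dvdn_gcdl.
  have : gcdn P Q %| gcdn b s by rewrite dvdn_gcd h1 h2.
  by rewrite (eqP cbs) dvdn1.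
case: (boolP (odd P)) => [oP|/even_sq [P' hP']].
  have eQ : ~~ odd Q.
    by apply/negP => oQ; have := congr1 odd hPQ; rewrite oddM oP oQ oddM.
  have [Q' hQ'] := even_sq eQ.
  have cPQ' : coprime P Q' by move: cPQ; rewrite hQ' coprimeMr => /andP [].
  have h' : P * Q' = R ^ 2 by apply/eqP; rewrite -(eqn_pmul2l (isT : 0 < 2)); apply/eqP; rewrite -hPQ hQ'; ring.
  have [n [m [h1 h2 h3]]] := sq_coprime2 cPQ' h'.
  exists m, n; split => //.
  - by rewrite hsPQ hQ' h1 h2; ring.
  - by rewrite hR h3 (mulnC n).
  - by move: cPQ'; rewrite h1 h2 coprime_pexpl // coprime_pexpr // coprime_sym.
have cP'Q : coprime P' Q by move: cPQ; rewrite hP' coprimeMl => /andP [].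
have h' : P' * Q = R ^ 2 by apply/eqP; rewrite -(eqn_pmul2l (isT : 0 < 2)); apply/eqP; rewrite -hPQ hP'; ring.
have [m [n [h1 h2 h3]]] := sq_coprime2 cP'Q h'.
exists m, n; split => //.
- by rewrite hsPQ hP' h1 h2; ring.
- by rewrite hR h3.
- by move: cP'Q; rewrite h1 h2 coprime_pexpl // coprime_pexpr.
Qed.

Lemma not3 (n m : nat) : coprime m n -> ~~ (3 %| n ^ 2 + 4 * m ^ 2).
Proof.
move=> cmn; apply/negP => h.
have : 3 %| n ^ 2 + m ^ 2.
  have e : n ^ 2 + 4 * m ^ 2 = n ^ 2 + m ^ 2 + 3 * m ^ 2 by ring.
  by move: h; rewrite e dvdn_addl // dvdn_mulr.
move/dvd3_sq => /andP [h1 h2].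
have : 3 %| gcdn m n by rewrite dvdn_gcd h1 h2.
by rewrite (eqP cmn).
Qed.

Lemma ar_par (t u v : nat) : 8 * v + 1 + 4 * (8 * t + 1) * (8 * u + 1) = 3 * (8 * t + 1) ^ 2 + (8 * u + 1) ^ 2 -> False.
Proof.
have e1 : 8 * v + 1 + 4 * (8 * t + 1) * (8 * u + 1) = 8 * (v + 32 * t * u + 4 * t + 4 * u) + 5 by ring.
have e2 : 3 * (8 * t + 1) ^ 2 + (8 * u + 1) ^ 2 = 8 * (24 * t * t + 6 * t + 8 * u * u + 2 * u) + 4 by ring.
rewrite e1 e2; lia.
Qed.

Lemma ar_i (n D X : nat) : n ^ 2 + 4 * (D + X) * D = 3 * (D + X) ^ 2 + D ^ 2 -> n ^ 2 = X * (3 * X + 2 * D).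
Proof.
have e1 : 4 * (D + X) * D = 4 * D * D + 4 * X * D by ring.
have e2 : 3 * (D + X) ^ 2 + D ^ 2 = 4 * D * D + 4 * X * D + X * (3 * X + 2 * D) by ring.
rewrite e1 e2; lia.
Qed.

Lemma ar_ii (n C k l : nat) : 3 * C = C + k.+1 + l ->
  n ^ 2 + 4 * C * (C + k.+1) = 3 * C ^ 2 + (C + k.+1) ^ 2 -> n ^ 2 + k.+1 * l = 0.
Proof.
move=> hl.
have F1 : 4 * C * (C + k.+1) = 4 * C * C + 4 * C * k.+1 by ring.
have F2 : 3 * C ^ 2 + (C + k.+1) ^ 2 = 4 * C * C + 2 * C * k.+1 + k.+1 * k.+1 by ring.
have F3 : k.+1 * (2 * C) = k.+1 * k.+1 + k.+1 * l.
  have -> : 2 * C = k.+1 + l by lia.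
  ring.
rewrite F1 F2; lia.
Qed.

Lemma ar_iii (n C Y : nat) : n ^ 2 + 4 * C * (Y + 3 * C) = 3 * C ^ 2 + (Y + 3 * C) ^ 2 -> n ^ 2 = (Y + 2 * C) * Y.
Proof.
have e1 : 4 * C * (Y + 3 * C) = 4 * C * Y + 12 * C * C by ring.
have e2 : 3 * C ^ 2 + (Y + 3 * C) ^ 2 = 12 * C * C + 6 * C * Y + Y * Y by ring.
have e3 : (Y + 2 * C) * Y = Y * Y + 2 * C * Y by ring.
rewrite e1 e2 e3; lia.
Qed.

Lemma par_aux (Y C : nat) : odd C != odd (Y + 3 * C) -> odd (Y + 2 * C).
Proof. by rewrite !oddD /=; case: (odd Y); case: (odd C). Qed.

Lemma step2 (m n a : nat) : 0 < m -> odd n -> coprime m n ->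
  a ^ 2 = (2 * m ^ 2 + n ^ 2) ^ 2 + (2 * (m * n)) ^ 2 ->
  exists c e f d, [/\ 0 < c, c <= m, f ^ 2 + 2 * c ^ 2 = e ^ 2 & f ^ 2 + 3 * c ^ 2 = d ^ 2].
Proof.
move=> m0 on cmn ha.
set N0 := n ^ 2 + 4 * m ^ 2.
have oN0 : odd N0 by rewrite /N0 oddD oddX on oddM.
have oa : odd a.
  by have := congr1 odd ha; rewrite oddX oddD !oddX oddD !oddM on /= => ->.
have [nu hnu] := odd_sq oN0.
have [al hal] := odd_sq oa.
have hN0a : N0 ^ 2 = a ^ 2 + 12 * m ^ 4 by rewrite ha /N0; ring.
have lean : al <= nu.
  have : a < N0 by rewrite -ltn_sqr hN0a -addn1 leq_add2l muln_gt0 expn_gt0 m0.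
  lia.
have [G1 hG1] : exists G1, nu = G1 + al by exists (nu - al); lia.
set G2 := G1 + 2 * al + 1.
have hGs : G1 + G2 = N0 by rewrite /G2; lia.
have hG : G1 * G2 = 3 * m ^ 4.
  have e : 4 * (G1 * G2) + a ^ 2 = N0 ^ 2 by rewrite hnu hal hG1 /G2; ring.
  lia.
have cG : coprime G1 G2.
  set g := gcdn G1 G2.
  have gN : g %| N0 by rewrite -hGs dvdn_add ?dvdn_gcdl ?dvdn_gcdr.
  have g3 : g %| 3 * m ^ 4 by rewrite -hG dvdn_mulr ?dvdn_gcdl.
  have cNm : coprime N0 m.
    have e : N0 = (4 * m) * m + n ^ 2 by rewrite /N0; ring.
    rewrite e coprime_sym /coprime gcdnMDl.
    by rewrite -(coprime_pexpr (k:=2)) // in cmn.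
  have cgm : coprime g (m ^ 4) by rewrite coprime_pexpr // (coprime_dvdl gN cNm).
  rewrite Gauss_dvdl // in g3.
  have c3N : coprime 3 N0 by rewrite prime_coprime // not3.
  have : g %| gcdn 3 N0 by rewrite dvdn_gcd g3 gN.
  by rewrite (eqP c3N) dvdn1.
have [c [d [h1 h2 h3]]] : exists c d, [/\ G1 + G2 = 3 * c ^ 4 + d ^ 4, m = c * d & coprime c d].
  have : 3 %| G1 * G2 by rewrite hG dvdn_mulr.
  rewrite Euclid_dvdM // => /orP [] h3.
    have [c [d [e1 e2 e3 e4]]] := split3 cG hG h3.
    by exists c, d; rewrite e1 e2.
  rewrite coprime_sym in cG; rewrite mulnC in hG.
  have [c [d [e1 e2 e3 e4]]] := split3 cG hG h3.
  by exists c, d; rewrite e1 e2 addnC.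
have c0 : 0 < c by move: m0; rewrite h2 muln_gt0 => /andP [].
have d0 : 0 < d by move: m0; rewrite h2 muln_gt0 => /andP [].
have cm : c <= m by rewrite h2 -{1}(muln1 c) leq_mul2l d0 orbT.
set C := c ^ 2; set D := d ^ 2.
have heq : n ^ 2 + 4 * C * D = 3 * C ^ 2 + D ^ 2.
  have e1 : c ^ 4 = C ^ 2 by rewrite /C -expnM.
  have e2 : d ^ 4 = D ^ 2 by rewrite /D -expnM.
  have e3 : 4 * C * D = 4 * m ^ 2 by rewrite h2 expnMn /C /D mulnA.
  by rewrite e3 -e1 -e2 -h1 hGs.
have par : odd C != odd D.
  rewrite /C /D !oddX.
  case: (boolP (odd c)) => oc; case: (boolP (odd d)) => od //=.
    have [t ht] := oddsq8 oc; have [u hu] := oddsq8 od; have [v hv] := oddsq8 on.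
    by move: heq; rewrite /C /D ht hu hv => /ar_par.
  move: h3; rewrite /coprime.
  have [k hk] := even_sq oc; have [l hl] := even_sq od.
  by rewrite hk hl -muln_gcdr; case: (gcdn k l) => [|[|]].
have c3 : ~~ (3 %| c) || ~~ (3 %| d).
  rewrite -negb_and; apply/negP => /andP [hc hd].
  have : 3 %| gcdn c d by rewrite dvdn_gcd hc hd.
  by rewrite (eqP h3).
case: (leqP D C) => hDC.
  have [X hX] : exists X, C = D + X by exists (C - D); rewrite subnKC.
  have nX : n ^ 2 = X * (3 * X + 2 * D) by move: heq; rewrite hX => /ar_i.
  have oX : odd X by move: par; rewrite hX oddD; case: (odd D); case: (odd X).
  have cXY : coprime X (3 * X + 2 * D).
    apply: (cop_gen h3 oX) => g gX gY; apply/andP; split.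
      have : g %| X + 2 * C by rewrite hX (_ : X + 2 * (D + X) = 3 * X + 2 * D) //; ring.
      by rewrite dvdn_addr.
    by move: gY; rewrite dvdn_addr // dvdn_mull.
  have [x [f [_ hf _]]] := sq_coprime2 cXY (esym nX).
  have hf3 : f ^ 2 + d ^ 2 = 3 * c ^ 2 by rewrite -/C -/D hX -hf; ring.
  have /andP [/dvdnP [f' hf'] /dvdnP [d' hd']] : (3 %| f) && (3 %| d) by rewrite dvd3_sq // hf3 dvdn_mulr.
  have : 3 %| c ^ 2.
    have e : 3 * c ^ 2 = 3 * (3 * (f' ^ 2 + d' ^ 2)) by rewrite -hf3 hd' hf'; ring.
    by rewrite (eqP (_ : c ^ 2 == 3 * (f' ^ 2 + d' ^ 2))) ?dvdn_mulr // -(eqn_pmul2l (isT : 0 < 3)) e.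
  rewrite Euclid_dvdX // => /andP [h3c _].
  by move: c3; rewrite h3c hd' dvdn_mull.
case: (leqP D (3 * C)) => hD3.
  have [k hk] : exists k, D = C + k.+1 by exists (D - C).-1; rewrite prednK ?subn_gt0 // subnKC // ltnW.
  have [l hl] : exists l, 3 * C = D + l by exists (3 * C - D); rewrite subnKC.
  have : n ^ 2 + k.+1 * l = 0.
    apply: (@ar_ii n C k l); first by rewrite -hk.
    by rewrite -hk.
  move/eqP; rewrite addn_eq0 expn_eq0 => /andP [/andP [/eqP n0 _] _].
  by move: on; rewrite n0.
have [Y hY] : exists Y, D = Y + 3 * C by exists (D - 3 * C); rewrite subnK // ltnW.
have nY : n ^ 2 = (Y + 2 * C) * Y by move: heq; rewrite hY => /ar_iii.
have oX : odd (Y + 2 * C).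
  by move: par; rewrite hY; apply: par_aux.
have cXY : coprime (Y + 2 * C) Y.
  apply: (cop_gen h3 oX) => g gX gY; apply/andP; split.
    by move: gX; rewrite (dvdn_addr _ gY).
  have : g %| 3 * (Y + 2 * C) by rewrite dvdn_mull.
  have e : 3 * (Y + 2 * C) = Y + 2 * (Y + 3 * C) by ring.
  by rewrite e (dvdn_addr _ gY) -hY.
have [e [f [he hf _]]] := sq_coprime2 cXY (esym nY).
exists c, e, f, d; split => //.
- by rewrite -hf -he.
- by rewrite -hf -/C -/D hY addnC.
Qed.

Lemma lt_aux c m n : 0 < m -> 0 < n -> c <= m -> c < 2 * (m * n).
Proof. nia. Qed.

Lemma descent (r : nat) : forall b s a, b ^ 2 + 2 * r ^ 2 = s ^ 2 -> b ^ 2 + 3 * r ^ 2 = a ^ 2 -> r = 0.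
Proof.
elim/ltn_ind: r => r IH b s a h1 h2.
case: (posnP r) => // r0; exfalso.
case: (boolP (coprime b r)) => cbr.
  have [m [n [hs hr cmn ob]]] := step1 r0 cbr h1.
  have os : odd s.
    have := congr1 odd h1; rewrite oddD (oddM 2 (r ^ 2)) /= addbF !oddX /= => <-; exact: ob.
  have on : odd n by move: os; rewrite hs oddD (oddM 2 (m ^ 2)) /= oddX.
  have m0 : 0 < m by move: r0; rewrite hr !muln_gt0 => /andP [_ /andP []].
  have n0 : 0 < n by case: n on {hs hr cmn}.
  have ha : a ^ 2 = (2 * m ^ 2 + n ^ 2) ^ 2 + (2 * (m * n)) ^ 2.
    by rewrite -hs -hr -h2 -h1; ring.
  have [c [e [f [d [c0 cm he hd]]]]] := step2 m0 on cmn ha.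
  have ltc := lt_aux m0 n0 cm.
  have cr : c < r by rewrite hr.
  by have := IH c cr f e d he hd; move=> c00; rewrite c00 in c0.
set g := gcdn b r.
have g0 : 0 < g by rewrite gcdn_gt0 r0 orbT.
have g1 : 1 < g by move: cbr; rewrite /coprime -/g; case: g g0 => [|[|]].
have [b' hb] := dvdnP (dvdn_gcdl b r).
have [r' hr] := dvdnP (dvdn_gcdr b r).
have gs : g %| s.
  rewrite -(dvdn_pexp2r _ _ (isT : 0 < 2)) -h1; apply: dvdn_add.
    exact: dvdn_exp2r (dvdn_gcdl b r).
  apply: dvdn_mull; exact: dvdn_exp2r (dvdn_gcdr b r).
have ga : g %| a.
  rewrite -(dvdn_pexp2r _ _ (isT : 0 < 2)) -h2; apply: dvdn_add.
    exact: dvdn_exp2r (dvdn_gcdl b r).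
  apply: dvdn_mull; exact: dvdn_exp2r (dvdn_gcdr b r).
have [s' hs] := dvdnP gs.
have [a' ha] := dvdnP ga.
rewrite -/g in hb hr.
have r'0 : 0 < r' by move: r0; rewrite hr muln_gt0 => /andP [].
have lt : r' < r by rewrite hr -{1}(muln1 r') ltn_mul2l r'0.
have g20 : 0 < g ^ 2 by rewrite expn_gt0 g0.
have e1 : b' ^ 2 + 2 * r' ^ 2 = s' ^ 2.
  apply/eqP; rewrite -(eqn_pmul2l g20); apply/eqP.
  have : (b' * g) ^ 2 + 2 * (r' * g) ^ 2 = (s' * g) ^ 2 by rewrite -hb -hr -hs.
  by rewrite !expnMn => e; rewrite [RHS]mulnC -e; ring.
have e2 : b' ^ 2 + 3 * r' ^ 2 = a' ^ 2.
  apply/eqP; rewrite -(eqn_pmul2l g20); apply/eqP.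
  have : (b' * g) ^ 2 + 3 * (r' * g) ^ 2 = (a' * g) ^ 2 by rewrite -hb -hr -ha.
  by rewrite !expnMn => e; rewrite [RHS]mulnC -e; ring.
by have := IH r' lt b' s' a' e1 e2 => e; rewrite e in r'0.
Qed.

Local Open Scope ring_scope.

Lemma key (g x y h q : rat) : h != 0 -> y != 0 -> x / y = q ^+ 2 -> x * y = g * h ^+ 2 -> g = (q * y / h) ^+ 2.
Proof.
move=> hh hy hq hxy.
have hx : x = q ^+ 2 * y by rewrite -hq divfK.
apply: (mulIf (expf_neq0 2 hh)); rewrite -hxy hx expr_div_n divfK ?expf_neq0 //; ring.
Qed.

Section Abs.
Variables U W : rat.
Hypotheses (hU : U != 0) (hW : W != 0) (hUW : U * W != 0) (h1 : 1 != 0 :> rat).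
Hypotheses (N1 : forall t : rat, -1 = t ^+ 2 -> False)
  (N2 : forall t : rat, U = t ^+ 2 -> False) (N3 : forall t : rat, - U = t ^+ 2 -> False)
  (N4 : forall t : rat, W = t ^+ 2 -> False) (N5 : forall t : rat, - W = t ^+ 2 -> False)
  (N6 : forall t : rat, U * W = t ^+ 2 -> False) (N7 : forall t : rat, - (U * W) = t ^+ 2 -> False).

Ltac try_h N hy hq :=
  first [ apply: N; apply: (key h1 hy hq); ring
        | apply: N; apply: (key hU hy hq); ring
        | apply: N; apply: (key hW hy hq); ring
        | apply: N; apply: (key hUW hy hq); ring ].

Ltac solve_pair hy hq :=
    first [ try_h N1 hy hq | try_h N2 hy hq | try_h N3 hy hq | try_h N4 hy hq
          | try_h N5 hy hq | try_h N6 hy hq | try_h N7 hy hq ].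

Ltac t1 N hy hq := apply: N; idtac "a"; apply: (key h1 hy hq); idtac "b"; ring.
Lemma eight_abs (i j : 'I_8) : i != j ->
  ~ same_sq_class (nth 0 [:: 1; -1; U * W; - (U * W); U; - U; W; - W] i)
                  (nth 0 [:: 1; -1; U * W; - (U * W); U; - U; W; - W] j).
Proof.
case: i => [[|[|[|[|[|[|[|[|//]]]]]]]] ?]; case: j => [[|[|[|[|[|[|[|[|//]]]]]]]] ?] //= _ [hx [hy [q hq]]].
  refine (N1 _); apply: (key h1 hy hq); ring.
  all: solve_pair hy hq.
Qed.
End Abs.


Lemma int_z3 (z : int) : ((z%:~R : 'Z_3) == 0) = (3 %| `|z|)%N.
Proof.
case: z => n; first exact: nat_z3.
by rewrite NegzE intrN oppr_eq0; exact: nat_z3.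
Qed.

Lemma cop_z3 (r s : int) : coprimez r s -> ~~ (((r%:~R : 'Z_3) == 0) && ((s%:~R : 'Z_3) == 0)).
Proof.
rewrite coprimezE !int_z3 => c; apply/negP => /andP [h1 h2].
have : (3 %| gcdn `|r| `|s|)%N by rewrite dvdn_gcd h1 h2.
by rewrite (eqP c).
Qed.

Lemma z3_C1 (x y m : 'Z_3) : ~~ ((x == 0) && (y == 0)) ->
  m ^+ 2 != (x ^+ 2 + y ^+ 2) * (2 * x ^+ 2 - y ^+ 2).
Proof.
by case: x => [[|[|[|//]]] ?]; case: y => [[|[|[|//]]] ?]; case: m => [[|[|[|//]]] ?].
Qed.

Lemma z3_C2 (x y : 'Z_3) : ~~ ((x == 0) && (y == 0)) -> 2 * y ^+ 2 - x ^+ 2 != 0.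
Proof. by case: x => [[|[|[|//]]] ?]; case: y => [[|[|[|//]]] ?]. Qed.

Lemma z3_C3 (x y : 'Z_3) : ~~ ((x == 0) && (y == 0)) ->
  (x ^+ 2 + y ^+ 2) * (2 * x ^+ 2 - y ^+ 2) * (2 * y ^+ 2 - x ^+ 2) != 0.
Proof. by case: x => [[|[|[|//]]] ?]; case: y => [[|[|[|//]]] ?]. Qed.

Lemma sq_int (n : int) (q : rat) : n%:~R = q ^+ 2 -> exists m : nat, n = (m ^ 2)%N%:Z.
Proof.
move=> h.
have d0 : (0 < denq q)%R := denq_gt0 q.
have e : (numq q) ^+ 2 = n * (denq q) ^+ 2.
  have e' : ((numq q ^+ 2)%:~R : rat) = (n * denq q ^+ 2)%:~R.
    by rewrite intrM !rmorphXn /= numqE exprMn h.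
  exact: (intr_inj e').
have n0 : (0 <= n)%R.
  have : (0 <= n * denq q ^+ 2)%R by rewrite -e sqr_ge0.
  by rewrite pmulr_lge0 // exprn_gt0.
have en : (`|numq q| ^ 2 = `|n| * `|denq q| ^ 2)%N.
  by rewrite -!abszX -abszM e.
have cnd := coprime_num_den q.
have dd : (`|denq q| %| `|numq q| ^ 2 * 1)%N by rewrite muln1 en; apply: dvdn_mull; apply: dvdn_exp.
rewrite Gauss_dvdr ?coprime_pexpr 1?coprime_sym // dvdn1 in dd.
exists `|numq q|%N; rewrite en (eqP dd) exp1n muln1.
by rewrite gez0_abs.
Qed.

Lemma val_int (r k : int) (m : nat) : r != 0 -> (k%:~R : 'Z_3) != 0 ->
  (m ^ 2)%N%:Z = 3 * r ^+ 2 * k -> False.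
Proof.
move=> r0 k3 h.
have := congr1 absz h; rewrite !abszM mulnn /= => h'.
apply: (@val_sq 3 `|k| `|r| m) => //.
  by rewrite -int_z3.
by rewrite absz_gt0.
Qed.

Lemma neg_uv_nat (R S M : nat) : coprime R S -> (0 < R)%N -> (2 * R ^ 2 <= S ^ 2)%N ->
  (M ^ 2 = (R ^ 2 + S ^ 2) * (S ^ 2 - 2 * R ^ 2))%N -> False.
Proof.
move=> cRS R0 le h.
case: (posnP (S ^ 2 - 2 * R ^ 2)) => Y0.
  apply: (@val_sq 2 1 R S) => //.
  by rewrite muln1; apply/eqP; rewrite eqn_leq le -subn_eq0 Y0.
set X := (R ^ 2 + S ^ 2)%N; set Y := (S ^ 2 - 2 * R ^ 2)%N.
have eX : X = (Y + 3 * R ^ 2)%N by rewrite /X /Y; lia.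
have eY : (2 * X + Y = 3 * S ^ 2)%N by rewrite /X /Y; lia.
have n3 : ~~ (3 %| X)%N.
  apply/negP => /dvd3_sq /andP [h1 h2].
  have : (3 %| gcdn R S)%N by rewrite dvdn_gcd h1 h2.
  by rewrite (eqP cRS).
have cXY : coprime X Y.
  set g := gcdn X Y.
  have gX : (g %| X)%N := dvdn_gcdl X Y.
  have gY : (g %| Y)%N := dvdn_gcdr X Y.
  have g1 : (g %| 3 * R ^ 2)%N by move: gX; rewrite eX dvdn_addr.
  have g2 : (g %| 3 * S ^ 2)%N by rewrite -eY dvdn_add // dvdn_mull.
  have g3 : (g %| 3)%N.
    have : (g %| gcdn (3 * R ^ 2) (3 * S ^ 2))%N by rewrite dvdn_gcd g1 g2.
    rewrite -muln_gcdr.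
    by move: cRS; rewrite -(coprime_pexpl (k:=2)) // -(coprime_pexpr (k:=2)) // /coprime => /eqP ->; rewrite muln1.
  have c3X : coprime 3 X by rewrite prime_coprime.
  have : (g %| gcdn 3 X)%N by rewrite dvdn_gcd g3 gX.
  by rewrite (eqP c3X) dvdn1.
have [a [b [ha hb _]]] := sq_coprime2 cXY (esym h).
have e1 : (b ^ 2 + 2 * R ^ 2 = S ^ 2)%N by rewrite -hb /Y; lia.
have e2 : (b ^ 2 + 3 * R ^ 2 = a ^ 2)%N by rewrite -hb -ha eX addnC.
have := descent e1 e2.
by move=> R00; rewrite R00 in R0.
Qed.

Lemma int_neg (a b c : nat) : (c < 2 * b)%N ->
  Posz a = - ((Posz b + Posz c) * (2 * Posz b - Posz c)) -> False.
Proof. nia. Qed.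

Lemma int_pos (a b c : nat) : (2 * b <= c)%N ->
  Posz a = - ((Posz b + Posz c) * (2 * Posz b - Posz c)) -> a = ((b + c) * (c - 2 * b))%N.
Proof. nia. Qed.

Lemma sq_abs (z : int) : z ^+ 2 = (`|z| ^ 2)%N%:Z.
Proof. by rewrite -abszX gez0_abs // sqr_ge0. Qed.

Lemma uv_cast (r s : int) : u_of r s * v_of r s = ((r ^+ 2 + s ^+ 2) * (2 * r ^+ 2 - s ^+ 2))%:~R.
Proof. by rewrite /u_of /v_of !(intrD, intrM, intrB, intrN, rmorphXn). Qed.

Lemma w_cast (r s : int) : u_of r s ^+ 2 - v_of r s ^+ 2 = (3 * r ^+ 2 * (2 * s ^+ 2 - r ^+ 2))%:~R.
Proof. rewrite /u_of /v_of !(intrD, intrM, intrB, intrN, rmorphXn); ring. Qed.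

Lemma NS_k (r k : int) (q : rat) : r != 0 -> (k%:~R : 'Z_3) != 0 -> (3 * r ^+ 2 * k)%:~R = q ^+ 2 -> False.
Proof. by move=> r0 k3 /sq_int [m hm]; apply: (val_int r0 k3); rewrite hm. Qed.

Section Main.
Variables r s : int.
Hypotheses (cop : coprimez r s) (r0 : r != 0).

Let c3 := cop_z3 cop.

Lemma NS_uv q : u_of r s * v_of r s = q ^+ 2 -> False.
Proof.
rewrite uv_cast => /sq_int [m hm].
have := congr1 (fun z : int => (z%:~R : 'Z_3)) hm.
rewrite !(intrD, intrM, intrB, intrN, rmorphXn).
move=> e; have := z3_C1 (m%:R) c3; rewrite -natrX => /eqP; apply.
exact: (esym e).
Qed.

Lemma NS_muv q : - (u_of r s * v_of r s) = q ^+ 2 -> False.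
Proof.
rewrite uv_cast -intrN => /sq_int [m hm].
rewrite (sq_abs r) (sq_abs s) in hm.
have R0 : (0 < `|r|)%N by rewrite absz_gt0.
case: (leqP (2 * `|r| ^ 2) (`|s| ^ 2)) => hle.
  have := int_pos hle (esym hm).
  by apply: neg_uv_nat; rewrite -?coprimezE.
exact: (int_neg hle (esym hm)).
Qed.

Let t_nz : ((2 * s ^+ 2 - r ^+ 2)%:~R : 'Z_3) != 0.
Proof. by rewrite !(intrD, intrM, intrB, intrN, rmorphXn); apply: z3_C2. Qed.

Lemma NS_w q : u_of r s ^+ 2 - v_of r s ^+ 2 = q ^+ 2 -> False.
Proof. by rewrite w_cast; apply: NS_k. Qed.

Lemma NS_mw q : - (u_of r s ^+ 2 - v_of r s ^+ 2) = q ^+ 2 -> False.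
Proof.
rewrite w_cast -intrN -mulrN; apply: NS_k => //.
by rewrite intrN oppr_eq0.
Qed.

Let A_cast : u_of r s * v_of r s * (u_of r s ^+ 2 - v_of r s ^+ 2) =
  (3 * r ^+ 2 * (((r ^+ 2 + s ^+ 2) * (2 * r ^+ 2 - s ^+ 2)) * (2 * s ^+ 2 - r ^+ 2)))%:~R.
Proof. rewrite uv_cast w_cast -intrM; congr (_%:~R); ring. Qed.

Let k_nz : ((((r ^+ 2 + s ^+ 2) * (2 * r ^+ 2 - s ^+ 2)) * (2 * s ^+ 2 - r ^+ 2))%:~R : 'Z_3) != 0.
Proof. by rewrite !(intrD, intrM, intrB, intrN, rmorphXn); apply: z3_C3. Qed.

Lemma NS_A q : u_of r s * v_of r s * (u_of r s ^+ 2 - v_of r s ^+ 2) = q ^+ 2 -> False.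
Proof. by rewrite A_cast; apply: NS_k. Qed.

Lemma NS_mA q : - (u_of r s * v_of r s * (u_of r s ^+ 2 - v_of r s ^+ 2)) = q ^+ 2 -> False.
Proof.
rewrite A_cast -intrN -mulrN; apply: NS_k => //.
by rewrite intrN oppr_eq0.
Qed.

End Main.

Lemma nz_of (x : rat) : (forall q : rat, x = q ^+ 2 -> False) -> x != 0.
Proof. by move=> h; apply/eqP => e; apply: (h 0); rewrite e expr0n. Qed.

Lemma N1_lem (q : rat) : -1 = q ^+ 2 -> False.
Proof.
move=> e; have : (0 <= q ^+ 2) by rewrite sqr_ge0.
by rewrite -e.
Qed.

Theorem lemma6p1 :
  exists S : seq (int * int),
    forall r s : int, coprimez r s -> r != 0 -> (r, s) \notin S ->
      eight_distinct_classes r s.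
Proof.
exists [::] => r s cop r0 _.
have hU := nz_of (NS_uv cop).
have hW := nz_of (NS_w cop r0).
have hUW : u_of r s * v_of r s * (u_of r s ^+ 2 - v_of r s ^+ 2) != 0 by rewrite mulf_neq0.
split.
  case=> [[|[|[|[|[|[|[|[|//]]]]]]]] ?] /=; rewrite ?oner_neq0 ?oppr_eq0 ?oner_neq0 //.
  all: try exact: hUW.
move=> i j ij; rewrite /eight_vals /A_of.
exact: (eight_abs hU hW hUW (oner_neq0 _) N1_lem (NS_uv cop) (NS_muv cop r0) (NS_w cop r0)
  (NS_mw cop r0) (NS_A cop r0) (NS_mA cop r0) ij).
Qed.
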